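(* Let $N,K\in\mathbb{Z}^+$ and $\mu_0\in[\frac1N,1]$ be such that $t=\mu_0N\in[N]$ and $N/t\in\mathbb{Z}^+$. Consider $K$ messages of $L$ bits each and $N$ databases each with storage capacity $\mu_0KL$ bits, and the following scheme: split each message $W_k$ into $N/t$ disjoint equal-size sub-messages $W_{k,1},\ldots,W_{k,N/t}$; split the databases into $N/t$ disjoint groups $\mathcal{N}_1,\ldots,\mathcal{N}_{N/t}$ of size $t$; store $\bigcup_{k\in[K]}W_{k,f}$ at every database of $\mathcal{N}_f$; to retrieve $W_\theta$, for each $f$ the user privately downloads $W_{\theta,f}$ from the $t$ databases of $\mathcal{N}_f$ using a capacity-achieving full-storage PIR scheme. This scheme is a private scheme achieving rate $$R=\left(1+\frac1t+\frac1{t^2}+\cdots+\frac1{t^{K-1}}\right)^{-1}.$$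
   Context: PIR setting: $K$ independent $L$-bit messages stored uncoded among $N$ non-colluding databases; a user wants message $W_\theta$ privately (no single database learns anything about $\theta$ from its query, answer and all stored data) and must decode it with zero error; rate $=L/D$ with $D$ the total number of downloaded bits. A full-storage PIR scheme is a PIR scheme where each of the participating databases stores all (sub-)messages; a capacity-achieving full-storage PIR scheme with $t$ databases and $K$ messages has rate $\left(1+\frac1t+\cdots+\frac1{t^{K-1}}\right)^{-1}$. *)

(* Defs.v *)
From HB Require Import structures.
From mathcomp Require Import all_boot all_order all_algebra.
Set Implicit Arguments. Unset Strict Implicit. Unset Printing Implicit Defensive.
Import Order.TTheory GRing.Theory Num.Theory.
Local Open Scope ring_scope.

(* Contents of all K messages: bit (k, b) of message W_k, b ranging over a
   finite type B of bit positions with #|B| = L. *)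
Definition msgs (K : nat) (B : finType) := {ffun ('I_K * B)%type -> bool}.

(* A (one-round) PIR scheme with database index type DB (N = #|DB|),
   K messages and bit positions B (L = #|B|), probabilities in R.
   - the user draws private randomness w : Omega with probability prob w;
   - database n receives query (query theta w n);
   - database n stores (uncoded) the message bits in (stored n);
   - database n answers the bit string (answer n q W), which must be a function
     of q and of its stored bits only (see [PIR_valid]);
   - the user decodes bit b of W_theta as decode theta w A b from all answers A. *)
Record PIR (R : numDomainType) (K : nat) (DB B : finType) := {
  Omega : finType;
  prob : Omega -> R;
  Qry : finType;
  query : 'I_K -> Omega -> DB -> Qry;
  stored : DB -> {set ('I_K * B)%type};
  answer : DB -> Qry -> msgs K B -> seq bool;
  decode : 'I_K -> Omega -> (DB -> seq bool) -> B -> bool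
}.
Arguments Omega {R K DB B} p.
Arguments prob {R K DB B} p _.
Arguments Qry {R K DB B} p.
Arguments query {R K DB B} p _ _ _.
Arguments stored {R K DB B} p _.
Arguments answer {R K DB B} p _ _ _.
Arguments decode {R K DB B} p _ _ _ _.

Section PIRdefs.
Variables (R : realFieldType) (K : nat) (DB B : finType).
Implicit Type S : PIR R K DB B.

Definition PIR_valid S : Prop :=
  [/\ (forall w, 0 <= prob S w),
      \sum_w prob S w = 1,
      (forall n q (W W' : msgs K B),
          (forall x, x \in stored S n -> W x = W' x) ->
          answer S n q W = answer S n q W') &
      (forall theta w (W : msgs K B), 0 < prob S w ->
          forall b, decode S theta w (fun n => answer S n (query S theta w n) W) b
                    = W (theta, b))].

(* privacy: the distribution of the query seen by each single database does
   not depend on theta (answers/storage are deterministic functions of the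
   query and of the messages, which are independent of (theta, w)). *)
Definition PIR_private S : Prop :=
  forall n (theta theta' : 'I_K) (x : Qry S),
    \sum_(w | query S theta w n == x) prob S w
    = \sum_(w | query S theta' w n == x) prob S w.

(* expected total number of downloaded bits when retrieving W_theta
   (expectation over the user's randomness and i.i.d. uniform messages) *)
Definition download S (theta : 'I_K) : R :=
  \sum_w prob S w *
    ((\sum_(W : msgs K B) \sum_n (size (answer S n (query S theta w n) W))%:R)
       / #|{: msgs K B}|%:R).

Definition rate S : R :=
  #|B|%:R / \big[Num.max/0]_(theta < K) download S theta.

Definition full_storage S : Prop := forall n, stored S n = setT.

Definition capacity (t : nat) : R := (\sum_(i < K) (t%:R ^- i))^-1.

Definition cap_achieving_full_storage S : Prop :=
  [/\ PIR_valid S, PIR_private S, full_storage S & rate S = capacity #|DB|].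

End PIRdefs.

(* The partition scheme: databases (f, j) with f : 'I_m the group and j : 'I_t
   the position inside group N_f; message bit (f, b) is bit b of sub-message
   W_{k,f}. *)
Section Partition.
Variables (R : realFieldType) (K m t L' : nat).
Variable S : PIR R K 'I_t 'I_L'.

Definition sub_msgs (f : 'I_m) (W : msgs K ('I_m * 'I_L')%type) : msgs K 'I_L' :=
  [ffun x : ('I_K * 'I_L')%type => W (x.1, (f, x.2))].

Definition partition_scheme : PIR R K ('I_m * 'I_t)%type ('I_m * 'I_L')%type := {|
  Omega := {ffun 'I_m -> Omega S};
  prob := fun w => \prod_f prob S (w f);
  Qry := Qry S;
  query := fun theta w n => query S theta (w n.1) n.2;
  stored := fun n => [set x : 'I_K * ('I_m * 'I_L')%type | x.2.1 == n.1];
  answer := fun n q W => answer S n.2 q (sub_msgs n.1 W);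
  decode := fun theta w A b => decode S theta (w b.1) (fun j => A (b.1, j)) b.2
|}.

End Partition.

(* Main.v *)
Require Import Defs.
From HB Require Import structures.
From mathcomp Require Import all_boot all_order all_algebra.
Import Order.TTheory GRing.Theory Num.Theory.
Local Open Scope ring_scope.

Lemma marginal (R : comRingType) (I J : finType) (p G : J -> R) (f : I) :
  \sum_j p j = 1 ->
  \sum_(w : {ffun I -> J}) (\prod_g p (w g)) * G (w f) = \sum_j p j * G j.
Proof.
move=> p1.
pose F g v := if g == f then p v * G v else p v.
transitivity (\sum_(w : {ffun I -> J}) \prod_g F g (w g)).
  apply: eq_bigr => w _.
  rewrite (bigD1 f) //= [RHS](bigD1 f) //= /F eqxx.
  have -> : \prod_(g | g != f) F g (w g) = \prod_(g | g != f) p (w g).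
    by apply: eq_bigr => g /negbTE gf; rewrite /F gf.
  by rewrite mulrAC.
rewrite -bigA_distr_bigA (bigD1 f) //= [X in _ * X]big1 ?mulr1.
  by apply: eq_bigr => j _; rewrite /F eqxx.
by move=> g /negbTE gf; rewrite -p1; apply: eq_bigr => j _; rewrite /F gf.
Qed.

Definition xorf (T : finType) (W E : {ffun T -> bool}) : {ffun T -> bool} :=
  [ffun x => W x (+) E x].

Arguments xorf {T}.

Lemma xorf_injl (T : finType) (E : {ffun T -> bool}) : injective (fun W => xorf W E).
Proof.
move=> W W' /ffunP h; apply/ffunP => x; move: (h x); rewrite !ffunE.
by move/(congr1 (addb ^~ (E x))); rewrite !addbK.
Qed.

Lemma xorf_injr (T : finType) (E : {ffun T -> bool}) : injective (xorf E).
Proof.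
move=> W W' /ffunP h; apply/ffunP => x; move: (h x); rewrite !ffunE.
by move/(congr1 (addb (E x))); rewrite !addKb.
Qed.

Lemma card_msgs_gt0 K (B : finType) : (0 < #|{: msgs K B}|)%N.
Proof. by rewrite card_ffun expn_gt0 card_bool. Qed.

Lemma sum_const_ft (R : nmodType) (T : finType) (x : R) : \sum_(i : T) x = x *+ #|T|.
Proof. by rewrite sumr_const. Qed.

Lemma sum_reindex (R : nmodType) (T : finType) (h : T -> T) (F : T -> R) :
  injective h -> \sum_i F i = \sum_i F (h i).
Proof. by move=> hi; rewrite (reindex_inj hi). Qed.

Lemma sum_exch (R : nmodType) (I J : finType) (F : I -> J -> R) :
  \sum_i \sum_j F i j = \sum_j \sum_i F i j.
Proof. exact: exchange_big. Qed.

Lemma alg (R : realFieldType) (a b : nat) (X Y : R) :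
  X *+ a = Y *+ b -> (0 < a)%N -> (0 < b)%N -> X / b%:R = Y / a%:R.
Proof.
move=> e a0 b0.
have ha : a%:R != 0 :> R by rewrite pnatr_eq0 -lt0n.
have hb : b%:R != 0 :> R by rewrite pnatr_eq0 -lt0n.
rewrite -[X *+ a]mulr_natr -[Y *+ b]mulr_natr in e.
apply: (mulIf ha); apply: (mulIf hb).
by rewrite mulrAC divfK // e divfK.
Qed.

Lemma sub_avg (R : realFieldType) K m L' (f : 'I_m)
  (H : msgs K 'I_L' -> R) :
  (\sum_(W : msgs K ('I_m * 'I_L')%type) H (sub_msgs f W))
     / #|{: msgs K ('I_m * 'I_L')%type}|%:R
  = (\sum_D H D) / #|{: msgs K 'I_L'}|%:R.
Proof.
pose ext (D : msgs K 'I_L') : msgs K ('I_m * 'I_L')%type :=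
  [ffun x : ('I_K * ('I_m * 'I_L')%type)%type => (x.2.1 == f) && D (x.1, x.2.2)].
have key : forall D, \sum_(W : msgs K ('I_m * 'I_L')%type) H (sub_msgs f W)
   = \sum_(W : msgs K ('I_m * 'I_L')%type) H (xorf (sub_msgs f W) D).
  move=> D; rewrite (@sum_reindex _ _ _ _ (@xorf_injl _ (ext D))).
  apply: eq_bigr => W _; congr H; apply/ffunP => x.
  by rewrite !ffunE /= eqxx /= -surjective_pairing.
have e1 : (\sum_(W : msgs K ('I_m * 'I_L')%type) H (sub_msgs f W))
             *+ #|{: msgs K 'I_L'}|
   = (\sum_D H D) *+ #|{: msgs K ('I_m * 'I_L')%type}|.
  rewrite -sum_const_ft.
  under eq_bigr => D _ do rewrite (key D).
  rewrite sum_exch -sum_const_ft; apply: eq_bigr => W _.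
  by rewrite [RHS](@sum_reindex _ _ _ _ (@xorf_injr _ (sub_msgs f W))).
apply: (@alg _ _ _ _ _ e1); exact: card_msgs_gt0.
Qed.

Lemma sum_pair (R : nmodType) (I J : finType) (F : (I * J)%type -> R) :
  \sum_n F n = \sum_i \sum_j F (i, j).
Proof. by rewrite pair_bigA; apply: eq_bigr => -[i j]. Qed.

Lemma max_scale (R : realFieldType) K (c : R) (d : 'I_K -> R) : 0 <= c ->
  \big[Num.max/0]_(i < K) (c * d i) = c * \big[Num.max/0]_(i < K) d i.
Proof.
move=> c0; elim/big_rec2: _ => [|i y1 y2 _ ->]; first by rewrite mulr0.
by rewrite maxr_pMr.
Qed.

Lemma download_part (R : realFieldType) K m t L' (S : PIR R K 'I_t 'I_L') theta :
  \sum_w prob S w = 1 ->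
  download (partition_scheme m S) theta = m%:R * download S theta.
Proof.
move=> p1.
pose G (j : 'I_t) (v : Omega S) : R := (\sum_(D : msgs K 'I_L') (size (answer S j (query S theta v j) D))%:R)
   / #|{: msgs K 'I_L'}|%:R.
have hS : download S theta = \sum_j \sum_v prob S v * G j v.
  rewrite /download sum_exch; apply: eq_bigr => v _.
  rewrite sum_exch mulr_suml mulr_sumr; apply: eq_bigr => j _.
  by rewrite /G.
rewrite hS /download /=.
transitivity (\sum_(w : {ffun 'I_m -> Omega S}) (\prod_(f < m) prob S (w f)) *
   \sum_f \sum_j G j (w f)).
  apply: eq_bigr => w _; congr (_ * _).
  rewrite sum_exch mulr_suml sum_pair; apply: eq_bigr => f _; apply: eq_bigr => j _.
  exact: (@sub_avg _ _ _ _ f (fun D => (size (answer S j (query S theta (w f) j) D))%:R)).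
transitivity (\sum_(w : {ffun 'I_m -> Omega S}) \sum_(f < m) \sum_(j < t)
   (\prod_(g < m) prob S (w g)) * G j (w f)).
  apply: eq_bigr => w _; rewrite mulr_sumr; apply: eq_bigr => f _.
  by rewrite mulr_sumr.
rewrite sum_exch.
transitivity (\sum_(f < m) \sum_j \sum_v prob S v * G j v).
  apply: eq_bigr => f _; rewrite sum_exch; apply: eq_bigr => j _.
  exact: (@marginal _ _ _ _ (G j) f p1).
by rewrite sum_const_ft card_ord mulr_natl.
Qed.

Theorem corollary1 (R : realFieldType) (N K L t : nat) (mu0 : R)
  (S : PIR R K 'I_t 'I_(L %/ (N %/ t))) :
  (0 < N)%N -> (0 < K)%N ->
  N%:R^-1 <= mu0 <= 1 -> mu0 * N%:R = t%:R -> (1 <= t <= N)%N ->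
  (t %| N)%N -> (N %/ t %| L)%N ->
  cap_achieving_full_storage S ->
  let P := partition_scheme (N %/ t) S in
  [/\ #|{: ('I_(N %/ t) * 'I_t)%type}| = N
        /\ #|{: ('I_(N %/ t) * 'I_(L %/ (N %/ t)))%type}| = L,
      (forall n, #|stored P n|%:R <= mu0 * (K * L)%:R),
      PIR_valid P,
      PIR_private P &
      rate P = (\sum_(i < K) (t%:R ^- i))^-1].
Proof.
move=> N0 K0 /andP[mu_lo mu_hi] muN /andP[t1 tN] tdN mdL [[p0 p1 ploc pdec] Spriv Sfull Srate] P.
have Nm : (N %/ t * t = N)%N := divnK tdN.
have Lm : (L %/ (N %/ t) * (N %/ t) = L)%N := divnK mdL.
split.
- rewrite !card_prod !card_ord; split; first exact: Nm.
  by rewrite mulnC.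
- move=> [f j].
  have -> : stored P (f, j) =
      (fun y : ('I_K * 'I_(L %/ (N %/ t)))%type => (y.1, (f, y.2))) @: setT.
    apply/setP => -[k [g b]]; rewrite inE /=; apply/idP/imsetP.
      by move/eqP=> ->; exists (k, b).
    by case=> -[k' b'] _ [_ -> _]; exact: eqxx.
  rewrite card_imset; last by move=> [k b] [k' b'] [-> ->].
  rewrite cardsT card_prod !card_ord.
  have hm : mu0 * (N %/ t)%:R = 1.
    have t0 : t%:R != 0 :> R by rewrite pnatr_eq0 -lt0n.
    apply: (mulIf t0); rewrite mul1r -mulrA -natrM Nm; exact: muN.
  have -> : (K * L)%:R = (K * (L %/ (N %/ t)))%:R * (N %/ t)%:R :> R.
    by rewrite -natrM -mulnA Lm.
  rewrite mulrCA hm mulr1; exact: lexx.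
- split.
  + move=> w; apply: prodr_ge0 => f _; exact: p0.
  + rewrite /= -(bigA_distr_bigA (fun (f : 'I_(N %/ t)) v => prob S v)).
    by apply: big1 => f _; exact: p1.
  + move=> [f j] q W W' h /=; congr (answer S j q _).
    apply/ffunP => x; rewrite !ffunE; apply: h; rewrite inE /=; exact: eqxx.
  + move=> theta w W pos [f b] /=.
    have /prodf_neq0 hne : \prod_g prob S (w g) != 0 := lt0r_neq0 pos.
    have hp : 0 < prob S (w f) by rewrite lt0r hne ?p0.
    have := pdec theta (w f) (sub_msgs f W) hp b; rewrite ffunE; exact.
- move=> [f j] theta theta' x /=.
  have E th : \sum_(w : {ffun 'I_(N %/ t) -> Omega S} | query S th (w f) j == x) \prod_g prob S (w g)
            = \sum_(v | query S th v j == x) prob S v.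
    rewrite big_mkcond [RHS]big_mkcond /=.
    transitivity (\sum_(w : {ffun 'I_(N %/ t) -> Omega S})
       (\prod_g prob S (w g)) * (query S th (w f) j == x)%:R).
      by apply: eq_bigr => w _; case: eqP => _; rewrite ?mulr1 ?mulr0.
    rewrite (@marginal _ _ _ _ (fun v => (query S th v j == x)%:R) f p1).
    by apply: eq_bigr => v _; case: eqP => _; rewrite ?mulr1 ?mulr0.
  rewrite !E; exact: Spriv.
- rewrite /rate.
  have m0 : (N %/ t)%:R != 0 :> R.
    by rewrite pnatr_eq0 -lt0n divn_gt0.
  have -> : \big[Num.max/0]_(th < K) download P th
      = (N %/ t)%:R * \big[Num.max/0]_(th < K) download S th.
    rewrite -max_scale ?ler0n //; apply: eq_bigr => th _.
    exact: (@download_part _ _ (N %/ t) _ _ S th p1).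
  rewrite card_prod !card_ord natrM invfM mulrACA divff // mul1r.
  by move: Srate; rewrite /rate /capacity !card_ord => <-.
Qed.
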